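(* The family $\mathcal C_n=\{C(w): w\in\mathcal W_n\}$ is a partition of $\mathcal W_n$.
   Context: Let $\mathcal A=\{a_1<a_2<\dots\}$ be a finite or countably infinite totally ordered alphabet. A word is primitive if it is not of the form $u^r$ with $r\ge 2$. $\mathcal W_n$ is the set of primitive words of length $n$ whose first letter is the smallest letter $a_w$ occurring in $w$ and whose last letter is different from $a_w$. Each $w\in\mathcal W_n$ decomposes uniquely as $w=B_1(w)\cdots B_{N}(w)$ into blocks, $N=N_n(w)$: each block begins with a run of $a_w$ and ends just before the next run of $a_w$. For a permutation $\sigma$ of $\{1,\dots,N\}$ set $\sigma.w=B_{\sigma(1)}(w)\cdots B_{\sigma(N)}(w)$, and $C(w)=\{\sigma.w:\sigma\in\mathfrak S_N,\ \sigma.w\in\mathcal W_n\}$. *)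

(* Defs.v *)
From HB Require Import structures.
From mathcomp Require Import all_boot all_order all_fingroup.
Set Implicit Arguments. Unset Strict Implicit. Unset Printing Implicit Defensive.
Import Order.TTheory.
Local Open Scope order_scope.

Section Words.
Context {d : Order.disp_t} {A : orderType d}.

Definition primitive (w : seq A) : Prop :=
  ~ exists (u : seq A) (r : nat), (2 <= r)%N /\ w = flatten (nseq r u).

Definition inW (n : nat) (w : seq A) : Prop :=
  [/\ size w = n, primitive w &
      exists (a : A) (t : seq A), w = a :: t
        /\ all (fun y => a <= y) w /\ last a t != a].

(* right-to-left construction of the block decomposition w.r.t. letter a:
   a new block is started at a letter x <> a immediately followed by a *)
Definition block_step (a : A) (x : A) (acc : seq (seq A)) : seq (seq A) :=
  match acc with
  | [::] => [:: [:: x]]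
  | b :: rest =>
      if (x != a) && (head x b == a) then [:: x] :: b :: rest
      else (x :: b) :: rest
  end.

(* blocks B_1(w) ... B_N(w), using the first letter (= a_w for w in W_n) *)
Definition blocks (w : seq A) : seq (seq A) :=
  match w with
  | [::] => [::]
  | a :: _ => foldr (block_step a) [::] w
  end.

Definition perm_blocks (w : seq A) (s : 'S_(size (blocks w))) : seq A :=
  flatten [seq nth [::] (blocks w) (s i) | i <- enum 'I_(size (blocks w))].

Definition Cl (n : nat) (w : seq A) (v : seq A) : Prop :=
  exists s : 'S_(size (blocks w)), v = perm_blocks s /\ inW n v.

End Words.

(* Main.v *)
Require Import Defs.
From mathcomp Require Import all_boot all_order all_fingroup.
From Stdlib Require Import Classical.
Set Implicit Arguments. Unset Strict Implicit. Unset Printing Implicit Defensive.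

Lemma permL (T : eqType) (x0 : T) (t r : seq T) :
  perm_eq r t <-> exists s : 'S_(size t),
    r = [seq nth x0 t (s i) | i <- enum 'I_(size t)].
Proof.
split.
- move/(perm_iotaP x0) => [Is HIs ->].
  have Hsz : size Is = size t by rewrite (perm_size HIs) size_iota.
  have Hu : uniq Is by rewrite (perm_uniq HIs) iota_uniq.
  have Hlt : forall i : 'I_(size t), nth 0 Is i < size t.
    move=> i; have : nth 0 Is i \in Is by rewrite mem_nth // Hsz.
    by rewrite (perm_mem HIs) mem_iota.
  pose g (i : 'I_(size t)) : 'I_(size t) := Ordinal (Hlt i).
  have ginj : injective g.
    move=> i j /(congr1 val) /= /eqP.
    rewrite nth_uniq ?Hsz // => /eqP; exact: val_inj.
  exists (perm ginj).
  rewrite -[in LHS](mkseq_nth 0 Is) Hsz /mkseq -val_enum_ord -map_comp.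
  rewrite -map_comp; apply: eq_map => i /=; by rewrite permE.
- move=> [s ->].
  rewrite -[X in perm_eq _ X](mkseq_nth x0 t) /mkseq -val_enum_ord.
  rewrite (_ : [seq nth x0 t (s i) | i <- enum 'I_(size t)] =
     map (nth x0 t) (map val (map s (enum 'I_(size t))))); last by rewrite -!map_comp.
  apply: perm_map.
  apply: uniq_perm.
  - by rewrite (map_inj_uniq val_inj) (map_inj_uniq (@perm_inj _ s)) enum_uniq.
  - by rewrite (map_inj_uniq val_inj) enum_uniq.
  move=> k; apply/mapP/mapP => -[i Hi ->].
    by exists i; rewrite ?mem_enum.
  exists i => //; apply/mapP; exists (s^-1 i)%g; first by rewrite mem_enum.
  by rewrite permKV.
Qed.

Section B.
Variables (d : Order.disp_t) (A : orderType d).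
Implicit Types (a x : A) (s y : seq A).

Definition good a (b : seq A) : Prop :=
  exists k y, 0 < k /\ y != [::] /\ all (fun z => z != a) y /\ b = nseq k a ++ y.

Lemma flat_step a x acc : flatten (block_step a x acc) = x :: flatten acc.
Proof. by case: acc => [|b r] //=; case: ifP. Qed.

Lemma flat_fold a s : flatten (foldr (block_step a) [::] s) = s.
Proof. by elim: s => //= x s IH; rewrite flat_step IH. Qed.

Lemma good_fold a x s : last x s != a ->
  exists b rest k y, foldr (block_step a) [::] (x :: s) = b :: rest /\
    b = nseq k a ++ y /\ y != [::] /\ all (fun z => z != a) y /\
    {in rest, forall c, good a c}.
Proof.
elim: s x => [|x' s IH] x /=.
  move=> Hx; exists [:: x], [::], 0, [:: x]; do ! split => //=; by rewrite Hx.
move=> /IH [b [rest [k [y [E [Eb [Hy [Hya Hr]]]]]]]].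
rewrite /= in E; rewrite E /=.
have Hhd : head x b == a -> 0 < k.
  rewrite Eb; case: k {Eb} => //; case: y Hy Hya => //= z y _ /andP [Hz _].
  by rewrite (negbTE Hz).
case: ifP => [/andP [Hxa Hh] | H].
  exists [:: x], (b :: rest), 0, [:: x]; do ! split => //=; first by rewrite andbT.
  move=> c; rewrite inE => /orP [/eqP -> | /Hr //].
  by exists k, y; do ! split => //; apply: Hhd.
case: (eqVneq x a) => [Exa | Hxa].
  exists (x :: b), rest, k.+1, y; do ! split => //; by rewrite Eb Exa.
have Hk : k = 0.
  case: k Eb {Hhd} => // k Eb; move/negbT: H; rewrite negb_and Eb /= eqxx orbF.
  by rewrite Hxa.
exists (x :: b), rest, 0, (x :: y); do ! split => //=.
  by rewrite Eb Hk.
by rewrite /= Hxa Hya.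
Qed.

Lemma good_blocks a t : last a t != a ->
  {in blocks (a :: t), forall c, good a c}.
Proof.
case: t => [|x t]; first by rewrite /= eqxx.
move=> /= /(@good_fold a x t) [b [rest [k [y [E [Eb [Hy [Hya Hr]]]]]]]].
rewrite /blocks /=; rewrite /= in E; rewrite E /= eqxx /=.
move=> c; rewrite inE => /orP [/eqP -> | /Hr //].
exists k.+1, y; do ! split => //; by rewrite Eb.
Qed.

Lemma fold_y a y acc : y != [::] -> all (fun z => z != a) y ->
  (forall c rest, acc = c :: rest -> exists c', c = a :: c') ->
  foldr (block_step a) acc y = y :: acc.
Proof.
move=> + + Hacc; elim: y => // z y IH _ /= /andP [Hz Hy].
case: y IH Hy => [|z' y] IH Hy /=.
  clear IH; case: acc Hacc => [|c rest] Hacc //=.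
  have [c' Ec] := Hacc c rest erefl; by rewrite Ec /= Hz eqxx.
have E := IH isT Hy; rewrite /= in E; rewrite E /=.
move: Hy => /= /andP [Hz' _]; by rewrite (negbTE Hz') andbF.
Qed.

Lemma fold_nseq a k b rest :
  foldr (block_step a) (b :: rest) (nseq k a) = (nseq k a ++ b) :: rest.
Proof. elim: k => // k /= ->; by rewrite /block_step eqxx. Qed.

Lemma fold_flatten a r : {in r, forall c, good a c} ->
  foldr (block_step a) [::] (flatten r) = r.
Proof.
elim: r => // b r IH Hg /=.
have [k [y [Hk [Hy [Hya Eb]]]]] := Hg b (mem_head _ _).
rewrite Eb foldr_cat IH; last by move=> c Hc; apply: Hg; rewrite inE Hc orbT.
rewrite foldr_cat (@fold_y a y r) //.
  by rewrite fold_nseq.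
move=> c rest Er; move: (Hg c); rewrite Er inE mem_head orbT => /(_ isT).
move=> [k' [y' [Hk' [_ [_ ->]]]]]; case: k' Hk' => // k' _; by exists (nseq k' a ++ y').
Qed.

Lemma blocks_flatten a r : r != [::] -> {in r, forall c, good a c} ->
  blocks (flatten r) = r.
Proof.
case: r => // b r _ Hg.
have [k [y [Hk [Hy [Hya Eb]]]]] := Hg b (mem_head _ _).
have H := fold_flatten Hg.
rewrite /= Eb in H *.
case: k Hk Eb H => // k _ Eb H /=.

Qed.


Lemma ClE n (w v : seq A) :
  Cl n w v <-> (exists r, perm_eq r (blocks w) /\ v = flatten r) /\ inW n v.
Proof.
rewrite /Cl /perm_blocks; split.
  move=> [s [-> H]]; split => //.
  exists [seq nth [::] (blocks w) (s i) | i <- enum 'I_(size (blocks w))]; split => //.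
  by apply/(permL [::]); exists s.
move=> [[r [Hr ->]] H].
have [s Es] := (permL [::] (blocks w) r).1 Hr.
by exists s; rewrite -Es.
Qed.

Lemma blocks_ok n (w : seq A) : inW n w ->
  exists a, {in blocks w, forall c, good a c} /\ flatten (blocks w) = w /\ blocks w != [::].
Proof.
move=> [_ _ [a [t [-> [_ Hl]]]]]; exists a; split; first exact: good_blocks.
have E : flatten (blocks (a :: t)) = a :: t by rewrite /blocks flat_fold.
split => //; apply/eqP => E'; by rewrite E' in E.
Qed.

Lemma Cl_refl n (w : seq A) : inW n w -> Cl n w w.
Proof.
move=> Hw; apply/ClE; split => //; exists (blocks w); split => //.
by have [a [_ [-> _]]] := blocks_ok Hw.
Qed.

Lemma key n (w v : seq A) : inW n w -> Cl n w v -> forall u, Cl n w u <-> Cl n v u.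
Proof.
move=> Hw /ClE [[r [Hr ->]] Hv] u.
have [a [Hg [_ Hne]]] := blocks_ok Hw.
have Hgr : {in r, forall c, good a c} by move=> c Hc; apply: Hg; rewrite -(perm_mem Hr).
have Hrne : r != [::].
  apply/eqP => Er; move: (perm_size Hr); rewrite Er /= => /esym /eqP.
  by rewrite size_eq0 (negbTE Hne).
rewrite !ClE (blocks_flatten Hrne Hgr); split => -[[r' [Hr' ->]] Hu]; split => //; exists r'; split => //.
  by apply: (perm_trans Hr'); rewrite perm_sym.
exact: (perm_trans Hr').
Qed.

End B.

Theorem proposition2 (d : Order.disp_t) (A : orderType d)
  (f : A -> nat) (f_inj : injective f) (n : nat) :
  (* every block is a nonempty subset of W_n *)
  (forall w : seq A, inW n w ->
     (exists v, Cl n w v) /\ (forall v, Cl n w v -> inW n v)) /\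
  (* the blocks cover W_n *)
  (forall v : seq A, inW n v -> exists w, inW n w /\ Cl n w v) /\
  (* two blocks are equal or disjoint *)
  (forall w w' : seq A, inW n w -> inW n w' ->
     (forall v, Cl n w v <-> Cl n w' v) \/
     (forall v, ~ (Cl n w v /\ Cl n w' v))).
Proof.
split.
  move=> w Hw; split; first by exists w; exact: Cl_refl.
  by move=> v /ClE [].
split.
  by move=> v Hv; exists v; split => //; exact: Cl_refl.
move=> w w' Hw Hw'.
case: (classic (exists v, Cl n w v /\ Cl n w' v)) => [[v [H1 H2]] | H].
  left; have K1 := key Hw H1; have K2 := key Hw' H2.
  by move=> u; split => Hu; [apply/K2/K1 | apply/K1/K2].
by right => v Hv; apply: H; exists v.
Qed.
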